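(* For every finite hypergraph $H$, $\mathrm{ch}_{um}(H)\le\Delta(H)+1$.
   Context: A hypergraph $H=(V,\mathcal E)$ has finite vertex set and nonempty hyperedges. $\Delta(H)$ is the maximum, over $v\in V$, of the number of hyperedges containing $v$. A coloring $C\colon V\to\mathbb Z_{>0}$ is unique-maximum if in every hyperedge the maximum color is attained by exactly one vertex. The um-choice number $\mathrm{ch}_{um}(H)$ is the minimum $k$ such that for every family $\{L_v\}_{v\in V}$ of sets of positive integers with $|L_v|\ge k$ there is a unique-maximum coloring $C$ with $C(v)\in L_v$ for all $v$. *)

(* Defs.v *)
From mathcomp Require Import all_boot.
Set Implicit Arguments. Unset Strict Implicit. Unset Printing Implicit Defensive.

Definition hypergraph (V : finType) (E : {set {set V}}) : Prop :=
  forall e, e \in E -> e != set0.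

Definition max_degree (V : finType) (E : {set {set V}}) : nat :=
  \max_(v : V) #|[set e in E | v \in e]|.

(* |L| >= k for a (possibly infinite) set L of naturals. *)
Definition card_ge (L : pred nat) (k : nat) : Prop :=
  exists s : seq nat, [/\ uniq s, size s = k & all (fun x => L x) s].

Definition um_coloring (V : finType) (E : {set {set V}}) (C : V -> nat) : Prop :=
  (forall v, 0 < C v) /\
  forall e, e \in E ->
    exists2 x, x \in e & forall y, y \in e -> y != x -> C y < C x.

Definition um_choosable (V : finType) (E : {set {set V}}) (k : nat) : Prop :=
  forall L : V -> pred nat,
    (forall v, (forall c, L v c -> 0 < c) /\ card_ge (L v) k) ->
    exists C : V -> nat, um_coloring E C /\ forall v, L v (C v).

(* Main.v *)
Require Import Defs.
From mathcomp Require Import all_boot.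

Lemma avoid_pick (s F : seq nat) : uniq s -> size F < size s ->
  exists2 c, c \in s & c \notin F.
Proof.
move=> us hs; case: (boolP (all (fun c => c \in F) s)) => [/allP H|].
  by have := uniq_leq_size us H; rewrite leqNgt hs.
by rewrite -has_predC => /hasP [c cs cF]; exists c.
Qed.

Theorem corollary5p4 (V : finType) (E : {set {set V}}) :
  hypergraph E -> um_choosable E (max_degree E).+1.
Proof.
move=> hE L HL.
set D := max_degree E.
have Hs : forall v, exists s : seq nat,
    [/\ uniq s, size s = D.+1 & all (fun x => L v x) s] by move=> v; case: (HL v).
have degv : forall v, #|[set e in E | v \in e]| <= D.
  by move=> v; rewrite /D /max_degree; apply: (leq_bigmax (F := fun v => #|[set e in E | v \in e]|)).
pose P (U : {set V}) := exists C : V -> nat, (forall v, L v (C v)) /\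
  forall e, e \in E -> e :&: U != set0 ->
    exists2 x, x \in e :&: U & forall y, y \in e :&: U -> y != x -> C y < C x.
have main : forall n (U : {set V}), #|U| = n -> P U.
  elim=> [|n IH] U hU.
    have [C HC] : exists C : V -> nat, forall v, L v (C v).
      apply: (@fin_all_exists V (fun _ => nat) (fun v c => L v c)) => v.
      have [s [us ss as_]] := Hs v.
      exists (nth 0 s 0); apply: (allP as_); by rewrite mem_nth // ss.
    exists C; split => // e _; move/eqP: hU; rewrite cards_eq0 => /eqP ->.
    by rewrite setI0 eqxx.
  have [v vU] : exists v, v \in U.
    by apply/set0Pn; rewrite -cards_eq0 hU.
  set U' := U :\ v.
  have hU' : #|U'| = n by move: hU; rewrite (cardsD1 v) vU add1n => -[].
  have [C [CL HC]] := IH U' hU'.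
  pose F := [seq \max_(y in e :&: U') C y | e <- enum [set e in E | v \in e]].
  have [s [us ss as_]] := Hs v.
  have [c cs cF] : exists2 c, c \in s & c \notin F.
    apply: avoid_pick => //; by rewrite size_map -cardE ss ltnS.
  exists (fun y => if y == v then c else C y); split.
    by move=> y; case: eqP => [->|_]; [apply: (allP as_) | apply: CL].
  move=> e eE neU.
  have memU' : forall y, (y \in e :&: U') = (y != v) && (y \in e :&: U).
    by move=> y; rewrite !inE; do ! case: (_ \in _); case: (y == v).
  case: (boolP (v \in e)) => ve; last first.
    have eq' : e :&: U' = e :&: U.
      apply/setP => y; rewrite memU'; case: eqP => [->|] //=.
      by rewrite inE (negbTE ve).
    have ne' : e :&: U' != set0 by rewrite eq'.
    have [x xe Hx] := HC e eE ne'.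
    rewrite eq' in xe Hx.
    exists x => // y ye yx.
    have xv : (x == v) = false by apply/negbTE; apply: contraNneq ve => <-; case/setIP: xe.
    have yv : (y == v) = false by apply/negbTE; apply: contraNneq ve => <-; case/setIP: ye.
    by rewrite xv yv; apply: Hx.
  case: (boolP (e :&: U' == set0)) => [/eqP e0|ne0].
    exists v; first by rewrite inE ve.
    move=> y ye yv; have : y \in e :&: U' by rewrite memU' yv.
    by rewrite e0 inE.
  have [x xe Hx] := HC e eE ne0.
  set m := \max_(y in e :&: U') C y.
  have Cxm : C x = m.
    apply/eqP; rewrite eqn_leq; apply/andP; split.
      by apply: (leq_bigmax_cond (P := fun y => y \in e :&: U')).
    apply/bigmax_leqP => y ye; case: (eqVneq y x) => [->//|yx].
    by apply: ltnW; apply: Hx.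
  have cm : c != m.
    apply: contraNneq cF => ->; apply/mapP; exists e => //.
    by rewrite mem_enum inE eE ve.
  have xv : (x == v) = false by move: xe; rewrite memU' => /andP [/negbTE].
  rewrite -Cxm in cm.
  case: (ltngtP c (C x)) => [lt|gt|eq]; last by rewrite eq eqxx in cm.
    exists x; first by move: xe; rewrite memU' => /andP [].
    move=> y ye yx; rewrite xv; case: eqP => [//|/eqP yv].
    by apply: Hx => //; rewrite memU' yv.
  exists v; first by rewrite inE ve.
  move=> y ye /negbTE yv; rewrite yv eqxx.
  have yU' : y \in e :&: U' by rewrite memU' yv.
  apply: leq_ltn_trans gt; case: (eqVneq y x) => [->//|yx].
  by apply: ltnW; apply: Hx.
have [C [CL HC]] := main _ [set: V] erefl.
exists C; split => //; split.
  by move=> v; case: (HL v) => pos _; apply: pos.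
move=> e eE.
have ne : e :&: [set: V] != set0 by rewrite setIT; apply: hE.
have [x xe Hx] := HC e eE ne.
rewrite setIT in xe Hx; exists x => //.
Qed.
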